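(* Let $k\ge1$, $n\ge 2k+1$ and $x\in X_{n,k}$. Then $d(f(x))=d(x)$; hence the number of descents is the same for all strings on the cycle $C(x)=(x,f(x),f^2(x),\dots)$.
   Context: $X_{n,k}$ is the set of binary strings of length $n$ with exactly $k$ ones, positions taken cyclically modulo $n$. Cyclic parenthesis matching: regard $x$ as cyclic, $1$s as opening and $0$s as closing brackets; each $1$ at position $i$ is matched to the last $0$ of the shortest cyclic substring starting at $i$ going right that contains equally many $0$s and $1$s (every $1$ is matched; $n-2k$ zeros are unmatched). $f(x)$ is obtained from $x$ by complementing all matched bits. $d(x)$ is the number of cyclic descents of $x$, i.e. the number of positions $i\in[n]$ with $x_i=1$ and $x_{i+1}=0$ (indices mod $n$). *)

(* Defs.v *)
From mathcomp Require Import all_boot.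
Set Implicit Arguments. Unset Strict Implicit. Unset Printing Implicit Defensive.

(* Binary strings of length n are sequences x : seq bool with size x = n;
   true = 1 (opening bracket), false = 0 (closing bracket).
   Positions are 0, ..., n-1, taken cyclically modulo n = size x. *)

Definition cbit (x : seq bool) (i : nat) : bool := nth false x (i %% size x).

Definition inX (n k : nat) (x : seq bool) : bool :=
  (size x == n) && (count id x == k).

Definition csub (x : seq bool) (i l : nat) : seq bool :=
  mkseq (fun j => cbit x (i + j)) l.

Definition balanced (x : seq bool) (i l : nat) : bool :=
  count id (csub x i l) == count negb (csub x i l).

Definition shortest_bal (x : seq bool) (i l : nat) : bool :=
  [&& 0 < l, balanced x i l & all (fun l' => ~~ balanced x i l') (iota 1 l.-1)].

Definition matched (x : seq bool) (p : nat) : bool :=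
  cbit x p ||
  has (fun i => has (fun l =>
     [&& cbit x i, shortest_bal x i l & (i + l - 1) %% size x == p %% size x])
       (iota 1 (size x))) (iota 0 (size x)).

Definition f (x : seq bool) : seq bool :=
  mkseq (fun p => cbit x p (+) matched x p) (size x).

Definition d (x : seq bool) : nat :=
  count (fun i => cbit x i && ~~ cbit x i.+1) (iota 0 (size x)).

(* Main.v *)
Require Import Defs.
From mathcomp Require Import all_boot.
From mathcomp Require Import zify.

Lemma cbit_mod x i : cbit x (i %% size x) = cbit x i.
Proof. by rewrite /cbit modn_mod. Qed.

Lemma cbitD_mod x a b : cbit x (a %% size x + b) = cbit x (a + b).
Proof. by rewrite /cbit modnDml. Qed.

Lemma csub_mod x i l : csub x (i %% size x) l = csub x i l.
Proof. by apply: eq_mkseq => j; rewrite cbitD_mod. Qed.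

Lemma shortest_bal_mod x i l : shortest_bal x (i %% size x) l = shortest_bal x i l.
Proof.
have hb : forall l', balanced x (i %% size x) l' = balanced x i l'
  by move=> l'; rewrite /balanced csub_mod.
rewrite /shortest_bal hb; congr [&& _, _ & _]; apply: eq_all => l'; by rewrite hb.
Qed.

Lemma matched_mod x p : matched x (p %% size x) = matched x p.
Proof. by rewrite /matched cbit_mod modn_mod. Qed.

Lemma cbit_f x p : cbit (f x) p = cbit x p (+) matched x p.
Proof.
case: x => [|b s]; first by rewrite /f /cbit /matched /= /cbit !nth_nil.
set x := b :: s.
have hn : 0 < size x by [].
rewrite {1}/cbit /f size_mkseq nth_mkseq; last by rewrite ltn_pmod.
by rewrite -/(cbit x (p %% size x)) cbit_mod matched_mod.
Qed.

Definition cc x i t := count id (csub x i t).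

Lemma ccS x i t : cc x i t.+1 = cc x i t + cbit x (i + t).
Proof. by rewrite /cc /csub /mkseq -addn1 iotaD map_cat count_cat /= addn0. Qed.

Lemma ccD x i a b : cc x i (a + b) = cc x i a + cc x (i + a) b.
Proof.
elim: b => [|b IH]; first by rewrite addn0 /cc /csub /= addn0.
by rewrite addnS !ccS IH -!addnA.
Qed.

Lemma balE x i l : balanced x i l = (2 * cc x i l == l).
Proof.
rewrite /balanced /cc.
have H : count id (csub x i l) + count negb (csub x i l) = size (csub x i l)
  by apply: count_predC.
rewrite size_mkseq in H.
apply/eqP/eqP; lia.
Qed.

Lemma cc1 x i : cbit x i -> cc x i 1 = 1.
Proof. by move=> h; rewrite ccS addn0 h. Qed.

Lemma pos_lemma x i l : cbit x i -> shortest_bal x i l ->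
  forall t, 1 <= t < l -> t < 2 * cc x i t.
Proof.
move=> hi /and3P [_ _ /allP hall].
move=> t; elim: t => [|t IH] ht; first by move: ht.
move/andP: ht => [h1 h2].
have hnb : ~~ balanced x i t.+1.
  apply: hall; rewrite mem_iota; lia.
rewrite balE in hnb.
case: t IH h1 h2 hnb => [|t] IH h1 h2 hnb.
  by rewrite cc1.
have := IH (ltac:(lia)).
rewrite ccS; move: hnb; rewrite ccS; lia.
Qed.

Lemma last_search (P : nat -> bool) a b : a <= b -> P a ->
  exists t, [/\ a <= t <= b, P t & forall s, t < s <= b -> ~~ P s].
Proof.
elim: b => [|b IH] hab hPa.
  exists 0; have ha : a = 0 by lia. subst a.
  split=> //; move=> s; lia.
case hb: (P b.+1).
  exists b.+1; split=> //; first lia. move=> s; lia.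
case: (leqP a b) => hab'.
  have [t [ht hPt hs]] := IH hab' hPa.
  exists t; split=> //; first lia.
  move=> s hs'; case: (eqVneq s b.+1) => [-> | hne]; first by rewrite hb.
  apply: hs; lia.
have ha : a = b.+1 by lia.
by rewrite ha hb in hPa.
Qed.

Lemma matched_of_bit x q : cbit x q -> matched x q.
Proof. by rewrite /matched => ->. Qed.

Lemma match10 x p : cbit x p -> ~~ cbit x p.+1 -> matched x p.+1.
Proof.
move=> hp hq.
have hn : 0 < size x.
  case: x hp {hq} => [|? ?] //; by rewrite /cbit nth_nil.
have hn2 : 1 < size x.
  case: (ltnP 1 (size x)) => // h.
  have e : size x = 1 by lia.
  move: hp hq; rewrite /cbit e !modn1 => ->. done.
rewrite /matched; apply/orP; right.
apply/hasP; exists (p %% size x); first by rewrite mem_iota add0n ltn_pmod.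
apply/hasP; exists 2; first by rewrite mem_iota; lia.
rewrite cbit_mod hp shortest_bal_mod /=.
apply/andP; split.
  rewrite /shortest_bal /= !balE /cc /csub /mkseq /= addn0 addn1 hp.
  by move: hq; case: (cbit x p.+1).
have -> : p %% size x + 2 - 1 = p %% size x + 1 by lia.
by rewrite modnDml addn1.
Qed.

Lemma match00 x p : ~~ cbit x p -> ~~ cbit x p.+1 -> matched x p.+1 -> matched x p.
Proof.
move=> hp hq /orP [hc | /hasP [i Hi /hasP [l Hl /and3P [xi sb Heq]]]].
  by rewrite hc in hq.
move: Hi Hl; rewrite !mem_iota => Hi Hl.
set n := size x in Hi Hl Heq.
have hn : 0 < n by lia.
have pos := @pos_lemma x i l xi sb.
have sb' := sb.
move: sb' => /and3P [l0 hbal _].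
rewrite balE in hbal.
have hl1 : cbit x (i + (l - 1)) = false.
  have -> : i + (l - 1) = i + l - 1 by lia.
  by rewrite /cbit (eqP Heq); apply: negbTE.
have hcl1 : 2 * cc x i (l - 1) = l.
  have e : l = (l - 1).+1 by lia.
  have := hbal; rewrite {1}e ccS hl1 addn0 => /eqP; lia.
have l2 : 2 <= l.
  case: (leqP 2 l) => // hl. have e : l = 1 by lia.
  move: hbal; rewrite e cc1 //.
have Heq2 : (i + (l - 2)) %% n = p %% n.
  apply/eqP; rewrite -(eqn_modDr 1) !addn1.
  have -> : (i + (l - 2)).+1 = i + l - 1 by lia.
  exact: Heq.
have hl2 : cbit x (i + (l - 2)) = false.
  by rewrite /cbit Heq2; apply: negbTE.
have hfin : forall j, j = i + (l - 2) -> j %% n = p %% n by move=> j ->.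
clear Heq Heq2.
have l3 : 3 <= l.
  case: (leqP 3 l) => // hl. have e : l = 2 by lia.
  by move: hl2; rewrite e subnn addn0 xi.
have hcl2 : 2 * cc x i (l - 2) = l.
  have e : l - 1 = (l - 2).+1 by lia.
  have := hcl1; rewrite e ccS hl2 addn0; lia.
have [t [ht hPt hs]] := @last_search (fun t => 2 * cc x i t == t + 1) 1 (l - 2)
   ltac:(lia) ltac:(by rewrite /= cc1).
move/eqP: hPt => hPt.
have htl : t < l - 2.
  case: (ltnP t (l - 2)) => // h. have e : t = l - 2 by lia.
  move: hPt; rewrite e hcl2; lia.
have big : forall s, t < s <= l - 2 -> s.+2 <= 2 * cc x i s.
  move=> s hs1; have := hs s hs1; have := pos s ltac:(lia); move=> a /eqP b; lia.
have hxt : cbit x (i + t).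
  have := big t.+1 ltac:(lia); rewrite ccS.
  case: (cbit x (i + t)) => //=; lia.
set l' := l - 1 - t.
have hsplit : forall s, cc x i (t + s) = cc x i t + cc x (i + t) s by move=> s; rewrite ccD.
rewrite /matched; apply/orP; right.
apply/hasP; exists ((i + t) %% n); first by rewrite mem_iota add0n ltn_pmod.
apply/hasP; exists l'; first by rewrite mem_iota; lia.
rewrite cbit_mod hxt shortest_bal_mod /=.
apply/andP; split.
  rewrite /shortest_bal balE.
  apply/and3P; split; first by lia.
    have := hsplit l'; have -> : t + l' = l - 1 by lia.
    move=> e; apply/eqP; lia.
  apply/allP => s; rewrite mem_iota => hs1.
  rewrite balE.
  have := hsplit s; have := big (t + s) ltac:(lia); move=> a b; apply/eqP; lia.
have -> : (i + t) %% n + l' - 1 = (i + t) %% n + (l - 2 - t) by lia.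
rewrite /n modnDml -/n.
by rewrite (hfin (i + t + (l - 2 - t))) //; lia.
Qed.

Lemma key x p : (~~ cbit (f x) p && cbit (f x) p.+1) = (cbit x p && ~~ cbit x p.+1).
Proof.
rewrite !cbit_f.
case hp: (cbit x p); case hq: (cbit x p.+1).
- by rewrite (@matched_of_bit x p) ?hp // (@matched_of_bit x p.+1) ?hq.
- by rewrite (@matched_of_bit x p) ?hp // (@match10 x p) ?hp ?hq.
- by rewrite (@matched_of_bit x p.+1) ?hq //= andbF.
- rewrite /=; case hm: (matched x p.+1); last by rewrite andbF.
  by rewrite (@match00 x p) ?hp ?hq.
Qed.

Lemma count_split (a : nat -> bool) s :
  count (fun i => a i && ~~ a i.+1) s + count (fun i => a i && a i.+1) s = count a s.
Proof. elim: s => //= j s IH; case: (a j); case: (a j.+1) => /=; lia. Qed.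

Lemma count_split2 (a : nat -> bool) s :
  count (fun i => ~~ a i && a i.+1) s + count (fun i => a i && a i.+1) s
  = count (fun i => a i.+1) s.
Proof. elim: s => //= j s IH; case: (a j); case: (a j.+1) => /=; lia. Qed.

Lemma count_shift (a : nat -> bool) n s :
  count (fun i => a i.+1) (iota s n) = count a (iota s.+1 n).
Proof. elim: n s => //= n IH s; by rewrite IH. Qed.

Lemma count_cyc (a : nat -> bool) n : a n = a 0 ->
  count a (iota 1 n) = count a (iota 0 n).
Proof.
case: n => // m h.
have -> : iota 1 m.+1 = iota 1 m ++ [:: m.+1] by rewrite -(addn1 m) (iotaD 1 m 1) add1n addn1.
by rewrite count_cat /= h addn0 addnC.
Qed.

Lemma d_sym y : count (fun i => cbit y i && ~~ cbit y i.+1) (iota 0 (size y))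
  = count (fun i => ~~ cbit y i && cbit y i.+1) (iota 0 (size y)).
Proof.
have h1 := count_split (cbit y) (iota 0 (size y)).
have h2 := count_split2 (cbit y) (iota 0 (size y)).
rewrite count_shift count_cyc in h2; last by rewrite /cbit modnn mod0n.
lia.
Qed.

Lemma d_f x : d (f x) = d x.
Proof.
have hs : size (f x) = size x by rewrite size_mkseq.
rewrite /d d_sym hs; apply: eq_count => i; exact: key.
Qed.

Theorem mainTheorem7 (n k : nat) (x : seq bool) :
  1 <= k -> 2 * k + 1 <= n -> inX n k x ->
  d (f x) = d x /\ (forall m : nat, d (iter m f x) = d x).
Proof.
move=> _ _ _; split; first exact: d_f.
elim=> // m IH; by rewrite iterS d_f.
Qed.
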